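(* Let $G$ be a finite abelian group, $M$ a $\hat G$-linear, left inductive monoid, $e$ a non-zero idempotent of $M$ with $\mathcal J$-class $J$. Then for every $W\in\mathrm{Rep}(\hat G_J,\hat G)$, $W{\uparrow_e}$ is a $\hat G$-linear representation of $M$ (an object of $\mathrm{Rep}(M,\hat G)$) under the action $a(x\otimes w)=(ax)\otimes w$.
   Context: $\hat G=G\sqcup\{0\}$ with $0$ absorbing. $\mathrm{Vect}_{\hat G}$: objects are finite pointed sets with an action of $\hat G$ ($0v=0$, $g0=0$) such that $G$ acts freely on nonzero elements; morphisms $f$ satisfy $f(0)=0$, $f(gv)=gf(v)$, $f(v_1)=f(v_2)\neq0\Rightarrow Gv_1=Gv_2$. A $\hat G$-linear monoid is a finite monoid $M$ with absorbing element $0_M$ containing $G$ as a subgroup of units commuting with all of $M$, with $G$ acting freely by translation on $M\setminus\{0_M\}$. $\mathrm{Rep}(M,\hat G)$: objects of $\mathrm{Vect}_{\hat G}$ with an $M$-action by morphisms of $\mathrm{Vect}_{\hat G}$, $0_M$ acting as zero and $g\in G$ as the scalar $g$. For $a\in M$: $J(a)=MaM$, $\mathcal J_a$ its $\mathcal J$-class ($a\sim b\iff J(a)=J(b)$), $I(a)=\{x\in J(a):MxM\neq J(a)\}$, $P(a)=(J(a)\setminus I(a))\cup\{0\}$ with product $xy$ if in $J(a)\setminus I(a)$ and $0$ otherwise; $M$ acts on $P(a)$ by left translation the same way. $M$ is left inductive if $P(e)$ is an object of $\mathrm{Rep}(M,\hat G)$ under left translation for every idempotent $e$. $G_J=eMe\cap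 J$ (a group with identity $e$), $\hat G_J=G_J\sqcup\{0\}$; $\mathrm{Rep}(\hat G_J,\hat G)$ consists of objects of $\mathrm{Vect}_{\hat G}$ with an action of $\hat G_J$ by morphisms of $\mathrm{Vect}_{\hat G}$, with $e$ acting as identity, $0$ as zero and $ge$ as the scalar $g$. $P(e)e=\{xe:x\in P(e)\}$. $W{\uparrow_e}=P(e)e\otimes_{\hat G_J}W$ is the set of symbols $x\otimes w$ ($x\in P(e)e$, $w\in W$) modulo the equivalence relation generated by $x\alpha\otimes w=x\otimes\alpha w$ ($\alpha\in\hat G_J$), $gx\otimes w=x\otimes gw$ ($g\in G$), and $x\otimes0=0\otimes w$; $G$ acts by $g(x\otimes w)=(gx)\otimes w$, and $ax$ denotes the product in $P(e)$. *)

(* Defs.v *)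
From HB Require Import structures.
From mathcomp Require Import all_boot all_fingroup.
Set Implicit Arguments. Unset Strict Implicit. Unset Printing Implicit Defensive.
Local Open Scope group_scope.

Record monData (gT : finGroupType) := MonData {
  mcar :> finType;
  mmul : mcar -> mcar -> mcar;
  mone : mcar;
  mzero : mcar;
  miota : gT -> mcar }.

Section Defs.
Variable gT : finGroupType.

(* An object: finite pointed set (X, z) with an action ga of G; the element 0
   of \hat G acts as the constant map to z. *)
Definition isVect (X : finType) (z : X) (ga : gT -> X -> X) : Prop :=
  [/\ forall x, ga 1 x = x,
      forall g h x, ga (g * h) x = ga g (ga h x),
      forall g, ga g z = z &
      forall g x, x != z -> ga g x = x -> g = 1].

Definition isVectMor (X Y : finType) (zX : X) (gaX : gT -> X -> X)
  (zY : Y) (gaY : gT -> Y -> Y) (f : X -> Y) : Prop :=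
  [/\ f zX = zY,
      forall g x, f (gaX g x) = gaY g (f x) &
      forall v1 v2, f v1 = f v2 -> f v1 != zY -> exists g, v1 = gaX g v2].

Variable M : monData gT.
Declare Scope monoid_scope.
Local Notation "a * b" := (mmul a b) : monoid_scope.
Delimit Scope monoid_scope with M.
Local Notation zero := (mzero M).
Local Notation one := (mone M).
Local Notation iota := (miota M).

Definition GlinearMonoid : Prop :=
  [/\ [/\ associative (@mmul _ M),
          left_id one (@mmul _ M), right_id one (@mmul _ M),
          left_zero zero (@mmul _ M) & right_zero zero (@mmul _ M)],
      [/\ injective iota, iota 1 = one,
          forall g h, iota (g * h) = (iota g * iota h)%M &
          forall g (a : M), (iota g * a)%M = (a * iota g)%M] &
      forall g (x : M), x != zero -> (iota g * x)%M = x -> g = 1].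

Definition isRep (X : finType) (z : X) (ga : gT -> X -> X) (act : M -> X -> X)
  : Prop :=
  [/\ isVect z ga,
      forall a, isVectMor z ga z ga (act a),
      [/\ forall x, act one x = x &
      forall a b x, act (a * b)%M x = act a (act b x)],
      forall x, act zero x = z &
      forall g x, act (iota g) x = ga g x].

Definition Jideal (a : M) : {set M} := [set (x * a * y)%M | x : M, y : M].
Definition Iideal (a : M) : {set M} :=
  [set x in Jideal a | Jideal x != Jideal a].
(* x in J(a) \ I(a), i.e. x lies in the J-class of a *)
Definition inJI (a x : M) : bool := x \in Jideal a :\: Iideal a.
Definition inP (a x : M) : bool := inJI a x || (x == zero).

Lemma inP_zero (a : M) : inP a zero.
Proof. by rewrite /inP eqxx orbT. Qed.

(* the product in P(a) (also the left action of M on P(a)) *)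
Definition mulP (a : M) (x y : M) : M :=
  if inJI a (x * y)%M then (x * y)%M else zero.

Definition Pt (a : M) := {x : M | inP a x}.
Definition pzero (a : M) : Pt a := exist _ zero (inP_zero a).
Definition pact (a : M) (b : M) (x : Pt a) : Pt a :=
  insubd (pzero a) (b * val x)%M.
Arguments pzero : clear implicits.
Arguments pact : clear implicits.

Definition left_inductive : Prop :=
  forall f : M, (f * f)%M = f ->
    isRep (pzero f) (fun g => pact f (iota g)) (pact f).

Variable e : M.
Definition eMe : {set M} := [set (e * x * e)%M | x : M].
Definition inGJ (x : M) : bool := (x \in eMe) && inJI e x.
Definition inGJhat (x : M) : bool := inGJ x || (x == zero).

(* Rep(\hat G_J, \hat G); the action of \hat G_J is given by a function on M,
   only its values on \hat G_J matter. *)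
Definition isRepJ (W : finType) (zW : W) (gaW : gT -> W -> W)
  (wact : M -> W -> W) : Prop :=
  [/\ isVect zW gaW,
      forall al, inGJhat al -> isVectMor zW gaW zW gaW (wact al),
      forall al be w, inGJhat al -> inGJhat be ->
        wact (al * be)%M w = wact al (wact be w) &
      [/\ forall w, wact e w = w,
      forall w, wact zero w = zW &
      forall g w, wact (iota g * e)%M w = gaW g w]].

Definition PeSet : {set M} := [set mulP e (val y) e | y : Pt e].

(* The induced object W^e = P(e)e (x)_{\hat G_J} W *)
Section Induced.
Variables (W : finType) (zW : W) (gaW : gT -> W -> W) (wact : M -> W -> W).

Definition Dom : {set M * W} := [set p | p.1 \in PeSet].

Definition gen (p q : M * W) : bool :=
  [&& p \in Dom, q \in Dom &
  [|| [exists x : M, exists al : M, exists w : W,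
        [&& inGJhat al, p == (mulP e x al, w) & q == (x, wact al w)]],
      [exists g : gT, exists x : M, exists w : W,
        (p == (mulP e (iota g) x, w)) && (q == (x, gaW g w))] |
      [exists x : M, exists w : W, (p == (x, zW)) && (q == (zero, w))]]].

Definition tequiv : rel (M * W) := connect (fun p q => gen p q || gen q p).
Definition cls (p : M * W) : {set M * W} := [set q | tequiv p q].

Definition Ind := {C : {set M * W} | [exists p in Dom, C == cls p]}.
End Induced.
End Defs.

(* Main.v *)
Require Import Defs.
From HB Require Import structures.
From mathcomp Require Import all_boot all_fingroup.
Set Implicit Arguments. Unset Strict Implicit. Unset Printing Implicit Defensive.
Local Open Scope group_scope.

Section Proof.
Variables (gT : finGroupType) (M : monData gT) (e : M).
Variables (W : finType) (zW : W) (gaW : gT -> W -> W) (wact : M -> W -> W).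
Hypothesis HG : GlinearMonoid M.
Hypothesis HL : left_inductive M.
Hypothesis Hee : mmul e e = e.
Hypothesis He0 : e != mzero M.
Hypothesis HW : isRepJ e zW gaW wact.

Local Notation "a ** b" := (mmul a b) (at level 40, left associativity).
Local Notation z0 := (mzero M).
Local Notation one := (mone M).
Local Notation io := (miota M).

Lemma mulA (a b c : M) : a ** (b ** c) = a ** b ** c.
Proof. by case: HG => [[]]. Qed.
Lemma mul1m (a : M) : one ** a = a.
Proof. by case: HG => [[]]. Qed.
Lemma mulm1 (a : M) : a ** one = a.
Proof. by case: HG => [[]]. Qed.
Lemma mul0m (a : M) : z0 ** a = z0.
Proof. by case: HG => [[]]. Qed.
Lemma mulm0 (a : M) : a ** z0 = z0.
Proof. by case: HG => [[]]. Qed.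
Lemma io1 : io 1 = one.
Proof. by case: HG => _ []. Qed.
Lemma ioM g h : io (g * h) = io g ** io h.
Proof. by case: HG => _ []. Qed.
Lemma ioC g (a : M) : io g ** a = a ** io g.
Proof. by case: HG => _ []. Qed.
Lemma iofree g (x : M) : x != z0 -> io g ** x = x -> g = 1.
Proof. by case: HG => _ _; apply. Qed.
Lemma ioV g : io (g^-1) ** io g = one.
Proof. by rewrite -ioM mulVg io1. Qed.

Lemma JP (y z : M) : reflect (exists u v, y = u ** z ** v) (y \in Jideal z).
Proof.
apply: (iffP imset2P) => [[u v _ _ ->]|[u [v ->]]]; first by exists u, v.
by exists u v.
Qed.

Lemma J_refl (y : M) : y \in Jideal y.
Proof. by apply/JP; exists one, one; rewrite mul1m mulm1. Qed.

Lemma J_trans (y z t : M) : y \in Jideal z -> z \in Jideal t -> y \in Jideal t.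
Proof.
move=> /JP[u [v ->]] /JP[u' [v' ->]]; apply/JP; exists (u ** u'), (v' ** v).
by rewrite !mulA.
Qed.

Lemma J_mull (a y : M) : a ** y \in Jideal y.
Proof. by apply/JP; exists a, one; rewrite mulm1. Qed.
Lemma J_mulr (a y : M) : y ** a \in Jideal y.
Proof. by apply/JP; exists one, a; rewrite mul1m. Qed.

Lemma JIP (a y : M) : inJI a y = (y \in Jideal a) && (a \in Jideal y).
Proof.
rewrite /inJI /Iideal !inE.
case Hy: (y \in Jideal a); rewrite ?andbF ?andbT //=.
rewrite negbK.
apply/eqP/idP => [Hs|Ha]; first by rewrite Hs J_refl.
apply/setP => t; apply/idP/idP => Ht.
  exact: J_trans Ht Hy.
exact: J_trans Ht Ha.
Qed.

Lemma JI0 : ~~ inJI e z0.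
Proof.
rewrite JIP; apply/negP => /andP[_ /JP[u [v Hv]]].
by move: He0; rewrite Hv mulm0 mul0m eqxx.
Qed.

Lemma JIg g (y : M) : inJI e (io g ** y) = inJI e y.
Proof.
rewrite !JIP.
have h1 : io g ** y \in Jideal y by apply: J_mull.
have h2 : y \in Jideal (io g ** y).
  by apply/JP; exists (io g^-1), one; rewrite mulm1 mulA ioV mul1m.
apply/andP/andP => [[H1 H2]|[H1 H2]]; split.
- exact: J_trans h2 H1.
- exact: J_trans H2 h1.
- exact: J_trans h1 H1.
- exact: J_trans H2 h2.
Qed.

Definition pw (w : M) n := iter n (mmul w) one.
Lemma pwS w n : pw w n.+1 = w ** pw w n.
Proof. by []. Qed.
Lemma pw0 w : pw w 0 = one.
Proof. by []. Qed.
Lemma pwSr w n : pw w n.+1 = pw w n ** w.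
Proof.
elim: n => [|n IH]; first by rewrite pwS pw0 mulm1 mul1m.
by rewrite [LHS]pwS IH mulA -pwS IH.
Qed.
Lemma pwD w m n : pw w (m + n) = pw w m ** pw w n.
Proof.
elim: m => [|m IH]; first by rewrite pw0 mul1m.
by rewrite addSn !pwS IH mulA.
Qed.

Lemma pigeon (w : M) : exists i p, 0 < p /\ pw w (i + p) = pw w i.
Proof.
pose f := fun k : 'I_#|M|.+1 => pw w k.
have : ~~ injectiveb f.
  apply/negP => /injectiveP /leq_card; by rewrite card_ord ltnn.
case/injectivePn => x [y Hxy Hf].
rewrite /f in Hf.
case: (ltngtP x y) => H; last by move: Hxy; rewrite (val_inj H) eqxx.
- exists x, (y - x); split; first by rewrite subn_gt0.
  by rewrite subnKC ?(ltnW H).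
- exists y, (x - y); split; first by rewrite subn_gt0.
  by rewrite subnKC ?(ltnW H).
Qed.

Lemma left_stab (z y : M) : z \in Jideal (y ** z) -> exists l, z = l ** (y ** z).
Proof.
case/JP=> u [v Hz].
set U := u ** y.
have Hk : forall k, z = pw U k ** z ** pw v k.
  elim=> [|k IH] /=; first by rewrite mul1m mulm1.
  by rewrite -[U ** pw U k]pwS pwSr {1}IH {1}Hz /U !mulA.
case: (pigeon U) => i [p [Hp Hi]].
have Hz' : z = pw U p ** z.
  by rewrite {1}(Hk i) -Hi addnC pwD [in RHS](Hk i) !mulA.
clear Hi; case: p Hp Hz' => // p _ Hz'.
exists (pw U p ** u).
by rewrite {1}Hz' pwSr /U !mulA.
Qed.

Lemma wW1 w : wact e w = w.
Proof. by case: HW => _ _ _ []. Qed.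
Lemma wW0 w : wact z0 w = zW.
Proof. by case: HW => _ _ _ []. Qed.
Lemma wWg g w : wact (io g ** e) w = gaW g w.
Proof. by case: HW => _ _ _ []. Qed.
Lemma wWM al be w : inGJhat e al -> inGJhat e be -> wact (al ** be) w = wact al (wact be w).
Proof. by case: HW => _ _ H _; apply: H. Qed.
Lemma wWz al : inGJhat e al -> wact al zW = zW.
Proof. by case: HW => _ H _ _ Hal; case: (H al Hal). Qed.
Lemma wWga al g w : inGJhat e al -> wact al (gaW g w) = gaW g (wact al w).
Proof. by case: HW => _ H _ _ Hal; case: (H al Hal). Qed.
Lemma gaWz g : gaW g zW = zW.
Proof. by case: HW => [[]]. Qed.
Lemma gaWfree g w : w != zW -> gaW g w = w -> g = 1.
Proof. by case: HW => [[_ _ _ H]] _ _ _; apply: H. Qed.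

Lemma eMeP y : reflect (exists x, y = e ** x ** e) (y \in eMe e).
Proof.
apply: (iffP imsetP) => [[x _ ->]|[x ->]]; first by exists x.
by exists x.
Qed.

Lemma GJ_JI al : inGJ e al -> inJI e al.
Proof. by case/andP. Qed.
Lemma GJ_l al : inGJ e al -> e ** al = al.
Proof. by case/andP => /eMeP[x ->] _; rewrite !mulA Hee. Qed.
Lemma GJ_r al : inGJ e al -> al ** e = al.
Proof. by case/andP => /eMeP[x ->] _; rewrite -!mulA Hee. Qed.
Lemma GJ_mk y : inJI e y -> e ** y = y -> y ** e = y -> inGJ e y.
Proof.
move=> H1 H2 H3; rewrite /inGJ H1 andbT; apply/eMeP; exists y.
by rewrite H2 H3.
Qed.
Lemma GJhat y : inGJ e y -> inGJhat e y.
Proof. by rewrite /inGJhat => ->. Qed.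

Lemma z0J y : z0 \in Jideal y.
Proof. by apply/JP; exists z0, one; rewrite !mul0m. Qed.

Lemma PeSetP x : (x \in PeSet e) = (x == z0) || (inJI e x && (x ** e == x)).
Proof.
apply/imsetP/idP => [[y _ ->]|].
  rewrite /mulP; case: ifP => H; last by rewrite eqxx.
  by rewrite H -mulA Hee eqxx orbT.
case/orP => [/eqP ->|/andP[H1 /eqP H2]].
  exists (pzero e) => //; rewrite /mulP /= mul0m (negbTE JI0) //.
have Hx : inP e x by rewrite /inP H1.
exists (exist _ x Hx) => //; rewrite /mulP /= H2 H1 //.
Qed.

Lemma Pe_r x : x \in PeSet e -> x ** e = x.
Proof. by rewrite PeSetP => /orP[/eqP ->|/andP[_ /eqP]]; rewrite ?mul0m. Qed.
Lemma Pe_J x : x \in PeSet e -> x \in Jideal e.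
Proof.
rewrite PeSetP => /orP[/eqP ->|/andP[H _]]; first exact: z0J.
by move: H; rewrite JIP => /andP[].
Qed.
Lemma Pe_JI x : x \in PeSet e -> x != z0 -> inJI e x.
Proof. by rewrite PeSetP => /orP[/eqP ->|/andP[H _]]; rewrite ?eqxx. Qed.
Lemma Pe0 : z0 \in PeSet e.
Proof. by rewrite PeSetP eqxx. Qed.

Lemma La x : inJI e x -> x ** e = x -> exists m, m ** x = e.
Proof.
move=> H1 H2.
have : e \in Jideal (x ** e) by rewrite H2; move: H1; rewrite JIP => /andP[].
by case/left_stab => l Hl; exists l; rewrite -H2 -Hl.
Qed.

Lemma Lb x al : inJI e x -> x ** e = x -> inGJ e al -> inJI e (x ** al).
Proof.
move=> H1 H2 H3; case: (La H1 H2) => m Hm.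
move: (H1) (GJ_JI H3); rewrite !JIP => /andP[Hx _] /andP[_ Ha].
rewrite (J_trans (J_mulr _ _) Hx) /=.
apply: J_trans Ha _; apply/JP; exists m, one.
by rewrite mulm1 mulA Hm GJ_l.
Qed.

Lemma eJ y : e ** y \in Jideal e.
Proof. exact: J_mulr. Qed.

Lemma Lc x al m : inJI e x -> x ** e = x -> inGJ e al ->
  inJI e (e ** (m ** (x ** al))) = inJI e (e ** (m ** x)).
Proof.
move=> H1 H2 H3; rewrite !mulA.
have Hy : (e ** m ** x) ** e = e ** m ** x by rewrite -mulA H2.
apply/idP/idP => H.
  move: H; rewrite !JIP -!mulA eJ /= => Hh.
  rewrite eJ /=; apply: J_trans Hh _.
  have -> : e ** (m ** (x ** al)) = e ** (m ** x) ** al by rewrite !mulA.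
  exact: J_mulr.
exact: Lb H Hy H3.
Qed.

Lemma mulP_JI a b : inJI e (a ** b) -> mulP e a b = a ** b.
Proof. by rewrite /mulP => ->. Qed.
Lemma mulP_nJI a b : ~~ inJI e (a ** b) -> mulP e a b = z0.
Proof. by rewrite /mulP => /negbTE ->. Qed.

Lemma Pe_mulP a x : x \in PeSet e -> mulP e a x \in PeSet e.
Proof.
move=> Hx; rewrite /mulP; case: ifP => H; last exact: Pe0.
by rewrite PeSetP H -mulA Pe_r // eqxx orbT.
Qed.

Definition Phi (p : M * W) : {ffun M -> W} :=
  [ffun m => if inJI e (e ** (m ** p.1)) then wact (e ** (m ** p.1)) p.2 else zW].

Lemma PhiE p m : Phi p m =
  if inJI e (e ** (m ** p.1)) then wact (e ** (m ** p.1)) p.2 else zW.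
Proof. by rewrite ffunE. Qed.

Lemma inGJ_emx x m : x ** e = x -> inJI e (e ** (m ** x)) -> inGJ e (e ** (m ** x)).
Proof.
move=> Hx H; apply: GJ_mk => //; first by rewrite mulA Hee.
by rewrite -!mulA Hx.
Qed.

Lemma Phi0w w m : Phi (z0, w) m = zW.
Proof. by rewrite PhiE /= !mulm0 (negbTE JI0). Qed.
Lemma Phix0 x m : x \in PeSet e -> Phi (x, zW) m = zW.
Proof.
move=> Hx; rewrite PhiE /=; case: ifP => // H.
by apply: wWz; apply: GJhat; apply: inGJ_emx => //; apply: Pe_r.
Qed.
Lemma Phim0 p : Phi p z0 = zW.
Proof. by rewrite PhiE mul0m mulm0 (negbTE JI0). Qed.

Lemma Phi_act a x w m : x \in PeSet e -> Phi (mulP e a x, w) m = Phi (x, w) (m ** a).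
Proof.
move=> Hx; rewrite /mulP; case: ifP => Ha.
  by rewrite !PhiE /= !mulA.
rewrite Phi0w PhiE /=; case: ifP => // H; exfalso.
move: Ha; rewrite JIP (J_trans (J_mull _ _) (Pe_J Hx)) /=.
move: H; rewrite JIP => /andP[_ H]; rewrite (J_trans H) //.
by apply/JP; exists (e ** m), one; rewrite mulm1 !mulA.
Qed.

Lemma GJge g : inGJ e (io g ** e).
Proof.
apply: GJ_mk.
- by rewrite JIg JIP J_refl.
- by rewrite mulA -ioC -mulA Hee.
- by rewrite -mulA Hee.
Qed.

Lemma Phi_g x w m g : x \in PeSet e -> Phi (x, w) (m ** io g) = gaW g (Phi (x, w) m).
Proof.
move=> Hx.
have E : e ** (m ** io g ** x) = io g ** (e ** (m ** x)).
  by rewrite !mulA -(ioC g (e ** m)) !mulA.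
rewrite !PhiE /= E JIg; case: ifP => H; last by rewrite gaWz.
have Hy := inGJ_emx (Pe_r Hx) H.
rewrite -{1}(GJ_l Hy) mulA wWM ?wWg //; apply: GJhat => //; exact: GJge.
Qed.

Lemma Phi_gen1 x al w m : x \in PeSet e -> inGJhat e al ->
  Phi (mulP e x al, w) m = Phi (x, wact al w) m.
Proof.
move=> Hx /orP[Hal|/eqP ->]; last first.
  by rewrite mulP_nJI ?mulm0 ?JI0 // Phi0w wW0 Phix0.
have [->|Hx0] := eqVneq x z0.
  by rewrite mulP_nJI ?mul0m ?JI0 // !Phi0w.
have HJ := Pe_JI Hx Hx0; have Hr := Pe_r Hx.
rewrite mulP_JI; last exact: Lb.
rewrite !PhiE /= Lc //; case: ifP => // H.
have -> : e ** (m ** (x ** al)) = e ** (m ** x) ** al by rewrite !mulA.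
by rewrite wWM //; apply: GJhat => //; apply: inGJ_emx.
Qed.

Lemma Phi_gen2 x g w m : x \in PeSet e ->
  Phi (mulP e (io g) x, w) m = Phi (x, gaW g w) m.
Proof.
move=> Hx; rewrite Phi_act // Phi_g // !PhiE /=; case: ifP => H; last by rewrite gaWz.
by rewrite wWga //; apply: GJhat; apply: inGJ_emx => //; apply: Pe_r.
Qed.

Local Notation gen := (gen e zW gaW wact).
Local Notation tequiv := (tequiv e zW gaW wact).
Local Notation cls := (cls e zW gaW wact).
Local Notation Dom := (Dom e W).

Lemma DomE p : (p \in Dom) = (p.1 \in PeSet e).
Proof. by rewrite inE. Qed.

Lemma Phi_gen p q : gen p q -> Phi p = Phi q.
Proof.
case/and3P => Hp Hq /or3P[].
- case/existsP=> x /existsP[al /existsP[w /and3P[Hal /eqP Ep /eqP Eq]]].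
  subst p q; rewrite DomE /= in Hq; apply/ffunP => m; exact: Phi_gen1.
- case/existsP=> g /existsP[x /existsP[w /andP[/eqP Ep /eqP Eq]]].
  subst p q; rewrite DomE /= in Hq; apply/ffunP => m; exact: Phi_gen2.
- case/existsP=> x /existsP[w /andP[/eqP Ep /eqP Eq]].
  subst p q; rewrite DomE /= in Hp; apply/ffunP => m.
  by rewrite Phi0w Phix0.
Qed.

Lemma Phi_teq p q : tequiv p q -> Phi p = Phi q.
Proof.
case/connectP => s Hs ->.
elim: s p Hs => [|r s IH] p //= /andP[Hr Hs].
rewrite -(IH r Hs).
by case/orP: Hr => /Phi_gen.
Qed.

Lemma JIe : inJI e e.
Proof. by rewrite JIP J_refl. Qed.

Lemma LI a v1 v2 : inJI e v1 -> inJI e v2 -> a ** v1 = a ** v2 ->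
  inJI e (a ** v1) -> exists g, v1 = io g ** v2.
Proof.
move=> H1 H2 E H3.
have [_ Hmor _ _ _] := HL Hee.
have P1 : inP e v1 by rewrite /inP H1.
have P2 : inP e v2 by rewrite /inP H2.
have [_ _ H] := Hmor a.
case: (H (exist _ v1 P1) (exist _ v2 P2)).
- by rewrite /pact /= E.
- apply/eqP => /(congr1 val); rewrite insubdK /=; last by rewrite unfold_in /inP H3.
  by move=> Hz; move: H3; rewrite Hz (negbTE JI0).
- move=> g /(congr1 val) /=; rewrite insubdK; first by exists g.
  by rewrite unfold_in /inP JIg H2.
Qed.

Lemma conv_strong x1 w1 x2 w2 m0 : x1 \in PeSet e -> x2 \in PeSet e ->
  Phi (x1, w1) = Phi (x2, w2) -> Phi (x1, w1) m0 != zW ->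
  exists be, [/\ inGJ e be, x1 ** be = x2 & wact be w2 = w1].
Proof.
move=> H1 H2 E Hm0.
have Hx1 : x1 != z0 by apply: contraNneq Hm0 => ->; rewrite Phi0w.
have Hw1 : w1 != zW by apply: contraNneq Hm0 => ->; rewrite Phix0.
have J1 := Pe_JI H1 Hx1; have R1 := Pe_r H1; have R2 := Pe_r H2.
case: (La J1 R1) => m1 Hm1.
have Ev : Phi (x1, w1) m1 = w1 by rewrite PhiE /= Hm1 Hee JIe wW1.
move: Ev; rewrite E PhiE /=.
case: ifP => Hb Ev; last by move: Hw1; rewrite -Ev eqxx.
have Gb := inGJ_emx R2 Hb.
move: Hb Ev Gb; move Ebe: (e ** (m1 ** x2)) => be Hb Ev Gb.
have Hx2 : x2 != z0.
  by apply/eqP => Ex2; move: Hb; rewrite -Ebe Ex2 !mulm0 (negbTE JI0).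
have J2 := Pe_JI H2 Hx2.
have Lb1 := Lb J1 R1 Gb.
have Ea : (e ** m1) ** (x1 ** be) = be.
  by rewrite !mulA -(mulA e m1 x1) Hm1 Hee GJ_l.
have Eb : (e ** m1) ** x2 = be by rewrite -mulA.
case: (LI Lb1 J2 (etrans Ea (esym Eb))); first by rewrite Ea GJ_JI.
move=> g Eg.
have Hg : io g ** be = be.
  rewrite -{2}Ea Eg -{1}Eb !mulA -(ioC g (e ** m1)) !mulA //.
have Hbz : be != z0 by apply/eqP => Hz; move: Hb; rewrite Hz (negbTE JI0).
have g1 := iofree Hbz Hg.
by exists be; split => //; rewrite Eg g1 io1 mul1m.
Qed.

Lemma Rsym : connect_sym (fun p q => gen p q || gen q p).
Proof. by apply: sym_connect_sym => p q; rewrite orbC. Qed.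

Lemma teq0 p : p \in Dom -> (forall m, Phi p m = zW) -> tequiv p (z0, zW).
Proof.
case: p => x w; rewrite DomE /= => Hx H.
have [->|Hw] := eqVneq w zW.
  apply: connect1; apply/orP; left.
  apply/and3P; split; rewrite ?DomE //= ?Pe0 //.
  apply/or3P; apply: Or33; apply/existsP; exists x; apply/existsP; exists zW.
  by rewrite !eqxx.
have [->|Hx0] := eqVneq x z0.
  apply: connect1; apply/orP; right.
  apply/and3P; split; rewrite ?DomE //= ?Pe0 //.
  apply/or3P; apply: Or33; apply/existsP; exists z0; apply/existsP; exists w.
  by rewrite !eqxx.
case: (La (Pe_JI Hx Hx0) (Pe_r Hx)) => m1 Hm1.
by move: (H m1); rewrite PhiE /= Hm1 Hee JIe wW1 => Ew; move: Hw; rewrite Ew eqxx.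
Qed.

Lemma conv p q : p \in Dom -> q \in Dom -> Phi p = Phi q -> tequiv p q.
Proof.
move=> Hp Hq E.
case: (boolP [exists m, Phi p m != zW]) => [/existsP[m0 Hm0]|/existsPn Hn].
  case: p Hp E Hm0 => x1 w1; case: q Hq => x2 w2; rewrite !DomE /= => H2 H1 E Hm0.
  case: (conv_strong H1 H2 E Hm0) => be [Gb Eb Ew].
  have Hx1 : x1 != z0 by apply: contraNneq Hm0 => ->; rewrite Phi0w.
  have Jb := Lb (Pe_JI H1 Hx1) (Pe_r H1) Gb.
  apply: connect1; apply/orP; right.
  apply/and3P; split; rewrite ?DomE //=.
  apply/or3P; apply: Or31; apply/existsP; exists x1; apply/existsP; exists be.
  apply/existsP; exists w2.
  by rewrite /inGJhat Gb mulP_JI // Eb Ew !eqxx.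
have Hp0 : forall m, Phi p m = zW by move=> m; apply/eqP; rewrite -[_ == _]negbK Hn.
have Hq0 : forall m, Phi q m = zW by move=> m; rewrite -E.
rewrite /tequiv; apply: connect_trans (teq0 Hp Hp0) _.
by rewrite Rsym; apply: teq0.
Qed.

Lemma mor_rep a x1 w1 x2 w2 m0 : x1 \in PeSet e -> x2 \in PeSet e ->
  (forall m, Phi (x1, w1) (m ** a) = Phi (x2, w2) (m ** a)) ->
  Phi (x1, w1) (m0 ** a) != zW ->
  exists g, forall m, Phi (x1, w1) m = Phi (x2, w2) (m ** io g).
Proof.
move=> H1 H2 E Hm0.
have E2 : Phi (mulP e a x1, w1) = Phi (mulP e a x2, w2).
  by apply/ffunP => m; rewrite !Phi_act.
have Hm0' : Phi (mulP e a x1, w1) m0 != zW by rewrite Phi_act.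
case: (conv_strong (Pe_mulP a H1) (Pe_mulP a H2) E2 Hm0') => ga [Gg Eg Ew].
have Ha1 : mulP e a x1 != z0 by apply: contraNneq Hm0' => ->; rewrite Phi0w.
have Ja1 : inJI e (a ** x1) by apply: contraNT Ha1 => /mulP_nJI ->.
rewrite mulP_JI // in Eg.
have Hx1 : x1 != z0 by apply: contraTneq Ja1 => ->; rewrite mulm0 JI0.
have J1 := Pe_JI H1 Hx1; have R1 := Pe_r H1.
have Ra1 : (a ** x1) ** e = a ** x1 by rewrite -mulA R1.
have Jg := Lb Ja1 Ra1 Gg.
have Ja2 : inJI e (a ** x2).
  apply: contraTT Jg => /mulP_nJI Hz; by rewrite Eg Hz JI0.
rewrite mulP_JI // in Eg.
have Hx2 : x2 != z0 by apply: contraTneq Ja2 => ->; rewrite mulm0 JI0.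
have J2 := Pe_JI H2 Hx2.
have J1g := Lb J1 R1 Gg.
case: (LI J1g J2 (_ : a ** (x1 ** ga) = a ** x2)).
- by rewrite mulA.
- by rewrite mulA Eg.
move=> g Hg; exists g => m.
rewrite -Ew -Phi_gen1 // ?GJhat // mulP_JI // Hg -Phi_act //.
by rewrite mulP_JI // JIg.
Qed.

Local Notation Ind := (Ind e zW gaW wact).

Definition rep (C : Ind) : M * W := odflt (z0, zW) [pick p in Dom | val C == cls p].

Lemma repP C : rep C \in Dom /\ val C = cls (rep C).
Proof.
rewrite /rep; case: pickP => [p /andP[H1 /eqP H2]|H] //=.
case/existsP: (valP C) => p /andP[H1 H2].
by move: (H p); rewrite H1 H2.
Qed.

Lemma cls_teq p q : cls p = cls q -> tequiv p q.
Proof.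
move=> E; have : q \in cls q by rewrite inE; exact: connect0.
by rewrite -E inE.
Qed.

Lemma teq_cls p q : tequiv p q -> cls p = cls q.
Proof.
move=> Hpq; apply/setP => r; rewrite !inE; apply/idP/idP => H.
  rewrite /tequiv in H Hpq *; apply: connect_trans _ H; by rewrite Rsym.
rewrite /tequiv in H Hpq *; exact: connect_trans Hpq H.
Qed.

Definition clsD p := if p \in Dom then cls p else cls (z0, zW).
Lemma clsDP p : [exists q in Dom, clsD p == cls q].
Proof.
rewrite /clsD; case: ifP => H; apply/existsP; [exists p | exists (z0, zW)].
  by rewrite H eqxx.
by rewrite DomE Pe0 eqxx.
Qed.
Definition mkI p : Ind := exist _ (clsD p) (clsDP p).

Definition PhiC := locked (fun C : Ind => Phi (rep C)).

Lemma K1 C1 C2 : PhiC C1 = PhiC C2 -> C1 = C2.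
Proof.
rewrite /PhiC -lock => E; apply: val_inj; case: (repP C1) (repP C2) => [D1 ->] [D2 ->].
by apply: teq_cls; apply: conv.
Qed.

Lemma PhiC_mk p : p \in Dom -> PhiC (mkI p) = Phi p.
Proof.
move=> Hp; case: (repP (mkI p)) => D E.
rewrite /= /clsD Hp in E.
by rewrite /PhiC -lock (Phi_teq (cls_teq E)).
Qed.

Definition actI := locked (fun a C => mkI (mulP e a (rep C).1, (rep C).2)).
Lemma Dom_act a p : p \in Dom -> (mulP e a p.1, p.2) \in Dom.
Proof. by rewrite !DomE /=; apply: Pe_mulP. Qed.

Lemma K2 a C m : PhiC (actI a C) m = PhiC C (m ** a).
Proof.
have [D _] := repP C.
rewrite /actI -lock PhiC_mk ?Dom_act // /PhiC -lock.
case: (rep C) D => x w; rewrite DomE /= => D; exact: Phi_act.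
Qed.

Definition zI := locked (mkI (z0, zW)).
Lemma K3 m : PhiC zI m = zW.
Proof. by rewrite /zI -lock PhiC_mk ?DomE ?Pe0 // Phi0w. Qed.

Lemma K4 C m g : PhiC C (m ** io g) = gaW g (PhiC C m).
Proof.
have [D _] := repP C; rewrite /PhiC -lock.
case: (rep C) D => x w; rewrite DomE /= => D; exact: Phi_g.
Qed.

Lemma eqact a C p : p \in Dom -> val C = cls p -> val (actI a C) = cls (mulP e a p.1, p.2).
Proof.
move=> Hp E.
have [D E1] := repP C.
rewrite /actI -lock /= /clsD Dom_act //.
apply: teq_cls; apply: conv; rewrite ?Dom_act //.
have E' : Phi (rep C) = Phi p by apply: Phi_teq; apply: cls_teq; rewrite -E1 E.
move: D E'; case: (rep C) => x w; case: p Hp {E} => y v; rewrite !DomE /= => Hy Hx E'.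
by apply/ffunP => m; rewrite !Phi_act // E'.
Qed.

Lemma nz_or_zero C : C != zI -> exists m0, PhiC C m0 != zW.
Proof.
move=> HC; case: (boolP [exists m, PhiC C m != zW]) => [/existsP[m0 Hm0]|/existsPn Hn].
  by exists m0.
case/eqP: HC; apply: K1; apply/ffunP => m; rewrite K3.
by apply/eqP; rewrite -[_ == _]negbK Hn.
Qed.

Lemma main_sec : exists (zI : Ind) (gaI : gT -> Ind -> Ind) (actI : M -> Ind -> Ind),
    [/\ val zI = cls (mzero M, zW),
        forall g (C : Ind) (p : M * W),
          p \in Dom -> val C = cls p ->
          val (gaI g C) = cls (mulP e (miota M g) p.1, p.2),
        forall a (C : Ind) (p : M * W),
          p \in Dom -> val C = cls p ->
          val (actI a C) = cls (mulP e a p.1, p.2) &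
        isRep zI gaI actI].
Proof.
exists zI, (fun g => actI (io g)), actI; split.
- by rewrite /zI -lock /= /clsD DomE Pe0.
- by move=> g C p Hp E; apply: eqact.
- by move=> a C p Hp E; apply: eqact.
split.
- split.
  + by move=> C; apply: K1; apply/ffunP => m; rewrite K2 io1 mulm1.
  + by move=> g h C; apply: K1; apply/ffunP => m; rewrite !K2 ioM mulA.
  + by move=> g; apply: K1; apply/ffunP => m; rewrite K2 !K3.
  + move=> g C HC Hg; case: (nz_or_zero HC) => m0 Hm0.
    have H : PhiC (actI (io g) C) m0 = PhiC C m0 by rewrite Hg.
    rewrite K2 K4 in H.
    exact: gaWfree Hm0 H.
- move=> a; split.
  + by apply: K1; apply/ffunP => m; rewrite K2 !K3.
  + move=> g C; apply: K1; apply/ffunP => m.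
    by rewrite !K2 -!mulA (ioC g a).
  + move=> C1 C2 E HC; case: (nz_or_zero HC) => m0 Hm0.
    have E' : forall m, PhiC C1 (m ** a) = PhiC C2 (m ** a).
      by move=> m; rewrite -!K2 E.
    rewrite K2 in Hm0.
    have [D1 _] := repP C1; have [D2 _] := repP C2.
    move: E' Hm0 D1 D2; rewrite /PhiC -lock.
    case R1: (rep C1) => [x1 w1]; case R2: (rep C2) => [x2 w2].
    rewrite !DomE /= => E' Hm0 D1 D2.
    case: (mor_rep D1 D2 E' Hm0) => g Hg; exists g.
    by apply: K1; apply/ffunP => m; rewrite K2 /PhiC -lock R1 R2; apply: Hg.
- split.
  + by move=> C; apply: K1; apply/ffunP => m; rewrite K2 mulm1.
  + by move=> a b C; apply: K1; apply/ffunP => m; rewrite !K2 mulA.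
- by move=> C; apply: K1; apply/ffunP => m; rewrite K2 mulm0 K3 /PhiC -lock Phim0.
- by [].
Qed.
End Proof.

Unset Implicit Arguments.
Local Close Scope group_scope.

Theorem mainTheorem9 (gT : finGroupType) (M : monData gT) (e : M)
  (W : finType) (zW : W) (gaW : gT -> W -> W) (wact : M -> W -> W) :
  abelian [set: gT] ->
  GlinearMonoid M ->
  left_inductive M ->
  mmul e e = e ->
  e != mzero M ->
  isRepJ e zW gaW wact ->
  exists (zI : Ind e zW gaW wact)
         (gaI : gT -> Ind e zW gaW wact -> Ind e zW gaW wact)
         (actI : M -> Ind e zW gaW wact -> Ind e zW gaW wact),
    [/\ val zI = cls e zW gaW wact (mzero M, zW),
        forall g (C : Ind e zW gaW wact) (p : M * W),
          p \in Dom e W -> val C = cls e zW gaW wact p ->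
          val (gaI g C) = cls e zW gaW wact (mulP e (miota M g) p.1, p.2),
        forall a (C : Ind e zW gaW wact) (p : M * W),
          p \in Dom e W -> val C = cls e zW gaW wact p ->
          val (actI a C) = cls e zW gaW wact (mulP e a p.1, p.2) &
        isRep zI gaI actI].
Proof.
move=> _ HG HL Hee He0 HW; exact: main_sec HG HL Hee He0 HW.
Qed.
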